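(* Let $n\ge 1$ be an integer and suppose that $A\subseteq\mathbb{Z}_5^n$ is a sum-free subset of size $|A|>\frac32\cdot5^{n-1}$. If $H<\mathbb{Z}_5^n$ is a maximal proper subgroup such that every $H$-coset $g+H$ satisfies $|A\cap(g+H)|<\frac12|H|$, then there is at most one $H$-coset $g+H$ with $|A\cap(g+H)|>\frac25|H|$.
   Context: $\mathbb{Z}_5^n$ denotes the elementary abelian $5$-group of rank $n$. A subset $S$ of an abelian group is sum-free if there are no $x,y,z\in S$ (not necessarily distinct) with $x+y=z$. *)

(* Defs.v *)
From mathcomp Require Import all_boot all_order all_algebra.
Set Implicit Arguments. Unset Strict Implicit. Unset Printing Implicit Defensive.
Import GRing.Theory.
Local Open Scope ring_scope.

Definition Z5n (n : nat) := 'rV['F_5]_n.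

Definition is_subgroup n (H : {set Z5n n}) : Prop :=
  0 \in H /\ (forall x y, x \in H -> y \in H -> x - y \in H).

Definition maximal_proper_subgroup n (H : {set Z5n n}) : Prop :=
  is_subgroup H /\ H != [set: Z5n n] /\
  (forall K : {set Z5n n}, is_subgroup K -> H \subset K ->
     K = H \/ K = [set: Z5n n]).

Definition coset n (g : Z5n n) (H : {set Z5n n}) : {set Z5n n} :=
  [set g + h | h in H].

Definition sum_free n (A : {set Z5n n}) : Prop :=
  forall x y z, x \in A -> y \in A -> z \in A -> x + y != z.

(* Main.v *)
Require Import Defs.
From mathcomp Require Import all_boot all_order all_algebra.
From mathcomp Require Import zify ring.
Set Implicit Arguments. Unset Strict Implicit. Unset Printing Implicit Defensive.
Import GRing.Theory.
Local Open Scope ring_scope.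

Section Generic.
Variable V : finZmodType.

Definition sumset (P Q : {set V}) : {set V} := [set p + q | p in P, q in Q].
Definition transl (P : {set V}) (g : V) : {set V} := [set p + g | p in P].
Definition subgrp (L : {set V}) := 0 \in L /\ forall x y, x \in L -> y \in L -> x - y \in L.

Lemma card_transl P g : #|transl P g| = #|P|.
Proof. apply: card_imset; exact: (addIr g). Qed.

Lemma mem_transl P g x : (x \in transl P g) = (x - g \in P).
Proof.
apply/imsetP/idP => [[p Pp ->]|Px]; first by rewrite addrK.
by exists (x - g) => //; rewrite subrK.
Qed.

Lemma mem_sumset (P Q : {set V}) p q : p \in P -> q \in Q -> p + q \in sumset P Q.
Proof. by move=> Pp Qq; apply/imset2P; exists p q. Qed.

Lemma subgrp_dvd (L Z : {set V}) : subgrp L ->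
  (forall z d, z \in Z -> d \in L -> z + d \in Z) -> (#|L| %| #|Z|)%N.
Proof.
move=> [L0 LB].
have LN : forall d, d \in L -> - d \in L by move=> d Ld; rewrite -sub0r LB.
elim: {Z}#|Z| {-2}Z (leqnn #|Z|) => [|m IH] Z.
  by rewrite leqn0 => /eqP ->; rewrite dvdn0.
move=> HZ Zper; case: (set_0Vmem Z) => [->|[z Zz]]; first by rewrite cards0 dvdn0.
set T := transl L z.
have sub : T \subset Z.
  by apply/subsetP => y; rewrite mem_transl => Ly; rewrite -(subrK z y) addrC Zper.
have cardZ : #|Z| = (#|Z :\: T| + #|L|)%N.
  by rewrite -(cardsID T Z) (setIidPr sub) card_transl addnC.
rewrite cardZ dvdn_addl //; apply: IH.
  have: (0 < #|L|)%N by apply/card_gt0P; exists 0.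
  by move: HZ; rewrite cardZ; lia.
move=> y d; rewrite !inE => /andP [yT yZ] Ld; rewrite Zper // andbT.
apply: contra yT; rewrite !mem_transl => H.
have -> : y - z = (y + d - z) - d by rewrite addrAC addrK.
exact: LB.
Qed.

Lemma e1 (p q x h : V) : p + (q - h) - x = p + q - (x + h).
Proof. by rewrite addrA [in RHS]opprD [in RHS]addrA [in RHS]addrAC. Qed.
Lemma e2 (p q x h : V) : q + (p - h) - x = p + q - (x + h).
Proof. by rewrite -e1 addrCA. Qed.

Lemma e3 (y a b : V) : y - (a - b) + a - b = y.
Proof. by rewrite opprB addrA subrK addrK. Qed.
Lemma e4 (y d i : V) : y - d - i + (d + i) = y.
Proof. by rewrite -[y - d - i]addrA -opprD subrK. Qed.

Definition goodpair (S : {set V}) N (P Q : {set V}) :=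
  [/\ P :&: Q != set0, (N <= #|P| + #|Q|)%N & exists x, sumset P Q \subset transl S x].

Lemma IM_aux S N m : forall P Q, (#|P :&: Q| <= m)%N -> goodpair S N P Q ->
  exists X L g, [/\ X != set0, subgrp L, (forall x d, x \in X -> d \in L -> x + d \in X),
     transl X g \subset S & (N <= #|X| + #|L|)%N].
Proof.
elim: m => [|m IH] P Q.
  by rewrite leqn0 => /eqP/cards0_eq E [nI _ _]; rewrite E eqxx in nI.
move=> Hm [nI HN [x Hx]].
set I := P :&: Q; set W0 := P :|: Q.
have W0I : forall w i, w \in W0 -> i \in I -> w + i \in sumset P Q.
  move=> w i; rewrite !inE => /orP [wP|wQ] /andP [iP iQ].
    exact: mem_sumset.
  by rewrite addrC; apply: mem_sumset.
have cardPQ : (#|W0| + #|I| = #|P| + #|Q|)%N by rewrite cardsUI.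
case: (boolP [exists h, (W0 :&: transl I h != set0) && (#|W0 :&: transl I h| < #|I|)%N]).
  case/existsP => h /andP [ne lt].
  apply: (IH (W0 :|: transl I h) (W0 :&: transl I h)).
    have -> : (W0 :|: transl I h) :&: (W0 :&: transl I h) = W0 :&: transl I h.
      by apply/setP => y; rewrite !in_setI in_setU; case: (y \in W0); case: (y \in transl I h).
    by rewrite -ltnS (leq_trans lt Hm).
  split.
  - have -> : (W0 :|: transl I h) :&: (W0 :&: transl I h) = W0 :&: transl I h.
      by apply/setP => y; rewrite !in_setI in_setU; case: (y \in W0); case: (y \in transl I h).
    exact: ne.
  - by rewrite cardsUI card_transl cardPQ.
  - exists (x + h); apply/subsetP => y /imset2P [p q pU qI ->].
    move: qI; rewrite inE => /andP [qW qT]; move: qT; rewrite mem_transl => qI.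
    rewrite mem_transl.
    move: pU; rewrite inE => /orP [pW|pT].
      by move/(subsetP Hx): (W0I _ _ pW qI); rewrite mem_transl e1.
    move: pT; rewrite mem_transl => pI.
    by move/(subsetP Hx): (W0I _ _ qW pI); rewrite mem_transl e2.
rewrite negb_exists => /forallP Hall.
have key : forall w i0 i, w \in W0 -> i0 \in I -> i \in I -> w - i0 + i \in W0.
  move=> w i0 i wW i0I iI.
  have ne : W0 :&: transl I (w - i0) != set0.
    apply/set0Pn; exists w; rewrite inE wW mem_transl.
    by rewrite opprB addrC subrK.
  have := Hall (w - i0); rewrite negb_and ne /= -leqNgt => le.
  have sub : W0 :&: transl I (w - i0) \subset transl I (w - i0) by apply: subsetIr.
  have eqT : W0 :&: transl I (w - i0) == transl I (w - i0).
    by rewrite eqEcard sub card_transl.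
  have : i + (w - i0) \in transl I (w - i0) by rewrite mem_transl addrK.
  rewrite -(eqP eqT) inE => /andP [H _]; by rewrite addrC.
case/set0Pn: nI => i0 i0I.
set L := [set d | transl W0 d \subset W0].
have Lfix : forall d, d \in L -> transl W0 d = W0.
  move=> d; rewrite inE => sub; apply/eqP.
  by rewrite eqEcard sub card_transl /=.
exists W0, L, (i0 - x); split.
- apply/set0Pn; exists i0; rewrite inE; move: i0I; rewrite inE => /andP [-> _] //.
- split.
    rewrite inE; apply/subsetP => y; rewrite mem_transl subr0 //.
  move=> d1 d2 Ld1 Ld2; rewrite inE; apply/subsetP => y; rewrite mem_transl => yW.
  have h1 : y - (d1 - d2) + d1 \in W0 by rewrite -(Lfix d1 Ld1) mem_transl addrK.
  have h2 : y - (d1 - d2) + d1 - d2 \in W0 by rewrite -mem_transl (Lfix d2 Ld2).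
  by rewrite e3 in h2.
- move=> y d yW Ld; rewrite -(Lfix d Ld) mem_transl addrK //.
- apply/subsetP => y; rewrite mem_transl => yW.
  by move/(subsetP Hx): (W0I _ _ yW i0I); rewrite mem_transl e3.
- rewrite -cardPQ in HN; apply: (leq_trans HN); rewrite leq_add2l.
  rewrite -(card_transl I (- i0)); apply: subset_leq_card; apply/subsetP => d.
  rewrite mem_transl opprK => dI; rewrite inE; apply/subsetP => y.
  rewrite mem_transl => yW.
  by have := key _ _ _ yW i0I dI; rewrite e4.
Qed.


Lemma IM (U W : {set V}) : U != set0 -> W != set0 ->
  exists X L g, [/\ X != set0, subgrp L, (forall x d, x \in X -> d \in L -> x + d \in X),
     transl X g \subset sumset U W & (#|U| + #|W| <= #|X| + #|L|)%N].
Proof.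
case/set0Pn => u Uu; case/set0Pn => w Ww.
apply: (@IM_aux _ _ #|U :&: transl W (u - w)| U (transl W (u - w))) => //.
split.
- apply/set0Pn; exists u; rewrite inE Uu mem_transl /=.
  by rewrite opprB addrC subrK.
- by rewrite card_transl.
- exists (u - w); apply/subsetP => y /imset2P [p q Up Tq ->]; rewrite mem_transl.
  rewrite mem_transl in Tq.
  by rewrite -addrA; apply: mem_sumset.
Qed.

End Generic.

Section Concrete.
Variable n : nat.
Local Notation V := (Z5n n).

Lemma f5 : (5%:R : 'F_5) = 0.
Proof. by apply/val_inj. Qed.

Lemma v5 (g : V) : g *+ 5 = 0.
Proof. by rewrite -scaler_nat f5 scale0r. Qed.

Lemma mem_coset (g x : V) (H : {set V}) : (x \in coset g H) = (x - g \in H).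
Proof.
apply/imsetP/idP => [[h Hh ->]|Hx]; first by rewrite addrC addKr.
by exists (x - g) => //; rewrite addrC subrK.
Qed.

Lemma card_coset (g : V) H : #|coset g H| = #|H|.
Proof. apply: card_imset; exact: addrI. Qed.

Section Sub.
Variable H : {set V}.
Hypothesis sgH : is_subgroup H.

Lemma sg0 : 0 \in H. Proof. by case: sgH. Qed.
Lemma sg_sub x y : x \in H -> y \in H -> x - y \in H.
Proof. by case: sgH => _; apply. Qed.
Lemma sg_opp x : x \in H -> - x \in H.
Proof. by move=> Hx; rewrite -sub0r sg_sub // sg0. Qed.
Lemma sg_add x y : x \in H -> y \in H -> x + y \in H.
Proof. by move=> Hx Hy; rewrite -(opprK y) sg_sub // sg_opp. Qed.
Lemma sg_muln x k : x \in H -> x *+ k \in H.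
Proof. by move=> Hx; elim: k => [|k IH]; rewrite ?mulr0n ?sg0 // mulrS sg_add. Qed.

Lemma coset_eq (g g' : V) : g - g' \in H -> coset g H = coset g' H.
Proof.
move=> Hg; apply/setP => x; rewrite !mem_coset; apply/idP/idP => Hx.
  have -> : x - g' = (x - g) + (g - g') by rewrite addrA subrK.
  exact: sg_add.
have -> : x - g = (x - g') - (g - g') by rewrite opprB addrA subrK.
exact: sg_sub.
Qed.

Lemma sum_coset (a b p q : V) : p \in coset a H -> q \in coset b H -> p + q \in coset (a + b) H.
Proof.
rewrite !mem_coset => Hp Hq.
have -> : p + q - (a + b) = (p - a) + (q - b) by rewrite opprD addrACA.
exact: sg_add.
Qed.

Lemma key35 j (a b : V) (U W : {set V}) : #|H| = (5 ^ j)%N ->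
  U \subset coset a H -> W \subset coset b H -> U != set0 -> W != set0 ->
  (3 * #|H| < 5 * (#|U| + #|W|))%N -> (3 * #|H| <= 5 * #|sumset U W|)%N.
Proof.
move=> hH sU sW nU nW lt.
have [X [L [g [nX sgL perX sub cardX]]]] := IM nU nW.
have sS : sumset U W \subset coset (a + b) H.
  apply/subsetP => y /imset2P [p q Up Wq ->]; apply: sum_coset.
    exact: (subsetP sU).
  exact: (subsetP sW).
have LH : L \subset H.
  case/set0Pn: nX => x0 Xx0; apply/subsetP => d Ld.
  have h1 : x0 + g \in coset (a + b) H.
    by apply: (subsetP sS); apply: (subsetP sub); rewrite mem_transl addrK.
  have h2 : x0 + d + g \in coset (a + b) H.
    by apply: (subsetP sS); apply: (subsetP sub); rewrite mem_transl addrK perX.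
  rewrite mem_coset in h1; rewrite mem_coset in h2.
  have := sg_sub h2 h1.
  have -> : x0 + d + g - (a + b) - (x0 + g - (a + b)) = d.
    by apply/rowP => i; rewrite !mxE; ring.
  by [].
have dLH : (#|L| %| #|H|)%N.
  apply: subgrp_dvd => // z d zH dL; apply: sg_add => //; exact: (subsetP LH).
have dLX : (#|L| %| #|X|)%N by apply: subgrp_dvd.
have XS : (#|X| <= #|sumset U W|)%N.
  by rewrite -(card_transl X g); apply: subset_leq_card.
apply: (leq_trans _ (leq_mul (leqnn 5) XS)).
rewrite hH in dLH lt *.
case/(dvdn_pfactor _ _ (isT : prime 5)): dLH => i ij hL.
case/dvdnP: dLX => w hX.
rewrite hL in cardX hX.
have X0 : (0 < #|X|)%N by rewrite card_gt0.
move: ij; rewrite leq_eqVlt => /orP [/eqP eij|ltij].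
  rewrite hX -eij in X0 *.
  have w0 : (0 < w)%N by move: X0; rewrite muln_gt0 => /andP [].
  have : (5 ^ i <= w * 5 ^ i)%N by rewrite leq_pmull.
  lia.
have ej : (5 ^ j = 5 * 5 ^ i * 5 ^ (j - i.+1))%N.
  by rewrite -expnS -expnD subnKC.
set l := (5 ^ i)%N in hX cardX ej *; set r := (5 ^ (j - i.+1))%N in ej.
have l0 : (0 < l)%N by rewrite expn_gt0.
rewrite ej hX; rewrite ej in lt.
have h3 : (3 * r < w.+1)%N.
  rewrite -(ltn_pmul2l (_ : 0 < 5 * l)%N); last by rewrite muln_gt0 l0.
  have : (3 * (5 * l * r) < 5 * (w * l + l))%N.
    by apply: (leq_trans lt); rewrite leq_mul2l -hX cardX orbT.
  have -> : (3 * (5 * l * r) = 5 * l * (3 * r))%N by nia.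
  have -> : (5 * (w * l + l) = 5 * l * w.+1)%N.
    by nia.
  by [].
have h4 : (3 * r <= w)%N by rewrite -ltnS.
nia.
Qed.

End Sub.
End Concrete.

Lemma cardU_le (T : finType) (X Y : {set T}) : (#|X :|: Y| <= #|X| + #|Y|)%N.
Proof. by rewrite cardsU leq_subr. Qed.

Lemma modmul5 n (g : Z5n n) m : g *+ (m %% 5) = g *+ m.
Proof. by rewrite {2}(divn_eq m 5) mulrnDr mulrnA v5 add0r. Qed.

Section Main.
Variables (n : nat) (A H : {set Z5n n}).
Hypothesis sgH : is_subgroup H.
Hypothesis maxH : forall K : {set Z5n n}, is_subgroup K -> H \subset K ->
     K = H \/ K = [set: Z5n n].
Hypothesis sf : sum_free A.
Hypothesis small : forall g : Z5n n, (2 * #|A :&: coset g H| < #|H|)%N.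
Variable j : nat.
Hypothesis hj : #|H| = (5 ^ j)%N.

Let f g := #|A :&: coset g H|.

Lemma f_eq g g' : g - g' \in H -> f g = f g'.
Proof. by move=> Hg; rewrite /f (coset_eq sgH Hg). Qed.

Lemma rule a b : (5 * (f a + f b) <= 3 * #|H|)%N \/ (5 * f (a + b)%R <= 2 * #|H|)%N.
Proof.
case: (leqP (5 * (f a + f b))%N (3 * #|H|)%N) => [le|lt]; [by left | right].
have na : A :&: coset a H != set0.
  apply/eqP => E; have := small b; move: lt; rewrite /f E cards0; lia.
have nb : A :&: coset b H != set0.
  apply/eqP => E; have := small a; move: lt; rewrite /f E cards0; lia.
have K := key35 sgH hj (subsetIr A (coset a H)) (subsetIr A (coset b H)) na nb lt.
set S := sumset _ _ in K.
have sS : S \subset coset (a + b) H.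
  apply/subsetP => y /imset2P [p q Pp Qq ->]; apply: (sum_coset sgH).
    by move: Pp; rewrite inE => /andP [].
  by move: Qq; rewrite inE => /andP [].
have disj : S :&: (A :&: coset (a + b) H) = set0.
  apply/setP => z; rewrite inE in_set0; apply/negP => /andP [/imset2P [p q Pp Qq ->]].
  move: Pp Qq; rewrite !inE => /andP [pA _] /andP [qA _] /andP [zA _].
  by have := sf pA qA zA; rewrite eqxx.
have : (#|S :|: (A :&: coset (a + b)%R H)| <= #|H|)%N.
  rewrite -(card_coset (a + b) H); apply: subset_leq_card.
  by rewrite subUset sS subsetIr.
have := cardsUI S (A :&: coset (a + b) H); rewrite disj cards0 addn0 => ->.
rewrite /f => HH.
have K' : (3 * #|H| <= 5 * #|S|)%N by exact: K.
move: K' HH; move: #|S| #|A :&: coset (a + b)%R H| #|H| => x y z; lia.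
Qed.

Lemma notinH g : (2 * #|H| < 5 * f g)%N -> g \notin H.
Proof.
move=> big; apply/negP => gH.
case: (rule g g); first by lia.
have -> : f (g + g) = f g by apply: f_eq; rewrite addrK.
lia.
Qed.

Lemma idsub (y z u v : Z5n n) : y - z - (u + (0 - v)) = (y - u) - (z - v).
Proof. by apply/rowP => i; rewrite !mxE; ring. Qed.

Lemma cover g : g \notin H -> forall x, exists k : 'I_5, x - g *+ k \in H.
Proof.
move=> gH x.
set K := [set y | [exists k : 'I_5, y - g *+ k \in H]].
have sgK : is_subgroup K.
  split.
    rewrite inE; apply/existsP; exists ord0; by rewrite mulr0n subr0 (sg0 sgH).
  move=> y z; rewrite !inE => /existsP [k Hk] /existsP [k' Hk'].
  apply/existsP; exists (Ordinal (ltn_pmod (k + (5 - k'))%N (isT : (0 < 5)%N))) => /=.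
  rewrite modmul5 mulrnDr mulrnBr; last exact: ltnW (ltn_ord k').
  rewrite v5.
  rewrite idsub.
  exact: (sg_sub sgH).
have HK : H \subset K.
  apply/subsetP => y Hy; rewrite inE; apply/existsP; exists ord0.
  by rewrite mulr0n subr0.
have gK : g \in K.
  rewrite inE; apply/existsP; exists (Ordinal (isT : (1 < 5)%N)).
  by rewrite /= mulr1n subrr (sg0 sgH).
case: (maxH sgK HK) => [EK|EK].
  by move: gK; rewrite EK (negbTE gH).
have : x \in K by rewrite EK inE.
by rewrite inE => /existsP.
Qed.

Lemma main_contra g1 g2 :
  (2 * #|H| < 5 * f g1)%N -> (2 * #|H| < 5 * f g2)%N ->
  coset g1 H = coset g2 H \/ (5 * #|A| <= 7 * #|H|)%N.
Proof.
move=> big1 big2.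
have g1H := notinH big1; have g2H := notinH big2.
have [k Hk] := cover g1H g2.
case: k Hk => [[|[|[|[|[|k]]]]] /= kp Hk] //.
- by rewrite mulr0n subr0 in Hk; rewrite Hk in g2H.
- left; apply/esym/(coset_eq sgH); by rewrite mulr1n in Hk.
- exfalso; case: (rule g1 g1); first by lia.
  have -> : f (g1 + g1) = f g2.
    apply: f_eq.
    have -> : g1 + g1 - g2 = - (g2 - g1 *+ 2) by apply/rowP => i; rewrite !mxE; ring.
    exact: (sg_opp sgH).
  lia.
- exfalso; case: (rule g2 g2); first by lia.
  have -> : f (g2 + g2) = f g1.
    apply: f_eq.
    have -> : g2 + g2 - g1 = (g2 - g1 *+ 3) + (g2 - g1 *+ 3) + g1 *+ 5.
      by apply/rowP => i; rewrite !mxE; ring.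
    by rewrite v5 addr0 (sg_add sgH).
  lia.
- right.
  have e4 : f (g1 *+ 4) = f g2.
    apply: f_eq.
    have -> : g1 *+ 4 - g2 = - (g2 - g1 *+ 4) by apply/rowP => i; rewrite !mxE; ring.
    exact: (sg_opp sgH).
  have r1 : (5 * (f g2 + f (g1 *+ 2)) <= 3 * #|H|)%N.
    case: (rule g2 (g1 *+ 2)) => // le.
    have : f (g2 + g1 *+ 2) = f g1.
      apply: f_eq.
      have -> : g2 + g1 *+ 2 - g1 = (g2 - g1 *+ 4) + g1 *+ 5.
        by apply/rowP => i; rewrite !mxE; ring.
      by rewrite v5 addr0.
    lia.
  have r2 : (5 * (f g1 + f (g1 *+ 3)) <= 3 * #|H|)%N.
    case: (rule g1 (g1 *+ 3)) => // le.
    have : f (g1 + g1 *+ 3) = f g2.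
      apply: f_eq.
      have -> : g1 + g1 *+ 3 - g2 = - (g2 - g1 *+ 4) by apply/rowP => i; rewrite !mxE; ring.
      exact: (sg_opp sgH).
    lia.
  have r3 : (5 * (f g1 + f 0%R) <= 3 * #|H|)%N.
    case: (rule g1 0) => // le.
    move: le; rewrite addr0; lia.
  have sub : A \subset (A :&: coset 0 H) :|: (A :&: coset g1 H) :|: (A :&: coset (g1 *+ 2) H)
                :|: (A :&: coset (g1 *+ 3) H) :|: (A :&: coset (g1 *+ 4) H).
    apply/subsetP => x Ax.
    have [k Hx] := cover g1H x; rewrite -mem_coset in Hx.
    case: k Hx => [[|[|[|[|[|k]]]]] /= kp2 Hx] //; rewrite !inE Ax /=.
    + by rewrite mulr0n in Hx; rewrite Hx.
    + by rewrite mulr1n in Hx; rewrite Hx !orbT.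
    + by rewrite Hx !orbT.
    + by rewrite Hx !orbT.
    + by rewrite Hx !orbT.
  have := subset_leq_card sub.
  have c1 := cardU_le (A :&: coset 0 H) (A :&: coset g1 H).
  have c2 := cardU_le ((A :&: coset 0 H) :|: (A :&: coset g1 H)) (A :&: coset (g1 *+ 2) H).
  have c3 := cardU_le ((A :&: coset 0 H) :|: (A :&: coset g1 H) :|: (A :&: coset (g1 *+ 2) H))
                (A :&: coset (g1 *+ 3) H).
  have c4 := cardU_le ((A :&: coset 0 H) :|: (A :&: coset g1 H) :|: (A :&: coset (g1 *+ 2) H)
                :|: (A :&: coset (g1 *+ 3) H)) (A :&: coset (g1 *+ 4) H).
  move: e4 r1 r2 r3 c1 c2 c3 c4 big1; rewrite /f.
  set U4 := _ :|: _ :|: _ :|: _ :|: A :&: coset (g1 *+ 4) H.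
  set U3 := _ :|: _ :|: _ :|: A :&: coset (g1 *+ 3) H.
  set U2 := _ :|: _ :|: A :&: coset (g1 *+ 2) H.
  set U1 := _ :|: A :&: coset g1 H.
  move: #|U4| #|U3| #|U2| #|U1| => u4 u3 u2 u1.
  move: #|A :&: coset (g1 *+ 4) H| #|A :&: coset g2 H| #|A :&: coset (g1 *+ 2) H| => a4 b a2.
  move: #|A :&: coset (g1 *+ 3) H| #|A :&: coset g1 H| #|A :&: coset 0 H| => a3 a1 a0.
  move: #|A| #|H| => sa h.
  lia.
Qed.

End Main.

Theorem proposition3 (n : nat) (A H : {set Z5n n}) :
  (1 <= n)%N ->
  sum_free A ->
  (3 * 5 ^ n.-1 < 2 * #|A|)%N ->
  maximal_proper_subgroup H ->
  (forall g : Z5n n, 2 * #|A :&: coset g H| < #|H|)%N ->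
  forall g1 g2 : Z5n n,
    (2 * #|H| < 5 * #|A :&: coset g1 H|)%N ->
    (2 * #|H| < 5 * #|A :&: coset g2 H|)%N ->
    coset g1 H = coset g2 H.
Proof.
move=> n1 sf hA mH small g1 g2 big1 big2.
move: mH; rewrite /maximal_proper_subgroup => -[sgH [neH maxH]].
have cardV : #|[set: Z5n n]| = (5 ^ n)%N by rewrite cardsT /Z5n card_mx card_Fp // mul1n.
have dH : (#|H| %| 5 ^ n)%N.
  rewrite -cardV; apply: subgrp_dvd => //.
  by move=> z d _ _; rewrite inE.
case/(dvdn_pfactor _ _ (isT : prime 5)): dH => j jn hj.
have jlt : (j < n)%N.
  rewrite ltn_neqAle jn andbT; apply/eqP => ejn.
  by apply: (negP neH); rewrite eqEcard subsetT cardV hj ejn leqnn.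
have jn1 : (j <= n.-1)%N by rewrite -ltnS (ltn_predK jlt).
have hle : (#|H| <= 5 ^ n.-1)%N by rewrite hj leq_pexp2l.
case: (main_contra sgH maxH sf small hj big1 big2) => // le.
exfalso; lia.
Qed.
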